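(* Let $A$ be a $\delta$-ring and $I\subseteq A$ an ideal. Suppose that $A$ is derived $(p,I)$-complete and that $I$ is generated by a distinguished element $d$. Then the following conditions are equivalent: (1) $p,d$ is a regular sequence on $A$; (2) $d,p$ is a regular sequence on $A$; (3) $\varphi(d),d$ is a regular sequence on $A$; (4) $d,\varphi(d)$ is a regular sequence on $A$; (5) $p,\varphi(d)$ is a regular sequence on $A$; (6) $\varphi(d),p$ is a regular sequence on $A$; (7) $p,\varphi^{i+1}(d)$ is a regular sequence on $A$ for every $i\ge 0$; (8) $\varphi^{i+1}(d),p$ is a regular sequence on $A$ for every $i\ge 0$; (9) $\varphi^{i+1}(d),\varphi^{j+1}(d)$ is a regular sequence on $A$ for all $i,j\ge 0$ with $i\neq j$. Moreover, if one of these equivalent conditions holds, then $A$ is $(p,I)$-adically complete.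
   Context: Fix a prime $p$; all rings are commutative $\mathbb{Z}_{(p)}$-algebras. A $\delta$-ring is a ring $A$ with a map of sets $\delta:A\to A$ such that $\delta(0)=\delta(1)=0$, $\delta(a+b)=\delta(a)+\delta(b)+\frac{a^p+b^p-(a+b)^p}{p}$ and $\delta(ab)=a^p\delta(b)+b^p\delta(a)+p\delta(a)\delta(b)$. Its Frobenius lift is the ring endomorphism $\varphi(a)=a^p+p\delta(a)$. An element $d$ is distinguished if $\delta(d)$ is a unit. For a finitely generated ideal $\mathfrak{a}=(g_1,\dots,g_s)$, a ring $A$ is derived $\mathfrak{a}$-complete if $A\to R\lim_n (A\otimes^L_A \mathrm{Kos}(A;g_1^n,\dots,g_s^n))$ is an isomorphism in $D(A)$. *)

(* Defs.v *)
From HB Require Import structures.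
From mathcomp Require Import all_boot all_order all_algebra.
Set Implicit Arguments. Unset Strict Implicit. Unset Printing Implicit Defensive.
Import GRing.Theory.
Local Open Scope ring_scope.

Section Defs.
Variable A : comPzRingType.

(* A is a Z_(p)-algebra: every prime l <> p is invertible in A. *)
Definition Zp_localized (p : nat) : Prop :=
  forall l : nat, prime l -> l != p -> exists u : A, l%:R * u = 1.

(* delta-ring axioms; (a^p + b^p - (a+b)^p)/p is written as the integral
   polynomial - \sum_{0<i<p} (C(p,i)/p) a^i b^(p-i). *)
Definition delta_ring (p : nat) (delta : A -> A) : Prop :=
  [/\ delta 0 = 0, delta 1 = 0,
      forall a b, delta (a + b) = delta a + delta b
          - \sum_(1 <= i < p) ('C(p, i) %/ p)%:R * a ^+ i * b ^+ (p - i)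
    & forall a b, delta (a * b) =
          a ^+ p * delta b + b ^+ p * delta a + p%:R * delta a * delta b].

Definition frob (p : nat) (delta : A -> A) (a : A) : A := a ^+ p + p%:R * delta a.

Definition is_unit (u : A) : Prop := exists v : A, u * v = 1.

Definition distinguished (delta : A -> A) (d : A) : Prop := is_unit (delta d).

(* Regular sequence x, y on A (Stacks 00LF): x is a nonzerodivisor on A,
   y is a nonzerodivisor on A/xA, and A/(x,y)A <> 0. *)
Definition regular2 (x y : A) : Prop :=
  [/\ forall a : A, x * a = 0 -> a = 0,
      forall a b : A, y * a = x * b -> exists c : A, a = x * c
    & ~ (exists a b : A, x * a + y * b = 1)].

(* Derived g-completeness of A, for a single element g (Stacks 091S/091T):
   T(A,g) = R lim (... -g-> A -g-> A) vanishes, i.e. both lim and lim^1 of the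
   tower vanish; the two-term complex computing it is
   prod A -> prod A, (x_n) |-> (x_n - g x_{n+1}). *)
Definition derived_complete_elem (g : A) : Prop :=
  (forall x : nat -> A, (forall n, x n = g * x n.+1) -> forall n, x n = 0) /\
  (forall y : nat -> A, exists x : nat -> A, forall n, y n = x n - g * x n.+1).

(* Derived completeness w.r.t. the ideal generated by a finite list of
   elements: derived complete w.r.t. each generator (Stacks 091Q). *)
Definition derived_complete (gs : seq A) : Prop :=
  forall g, g \in gs -> derived_complete_elem g.

Definition in_pow_pd (p d : A) (n : nat) (x : A) : Prop :=
  exists c : nat -> A, x = \sum_(i < n.+1) c i * p ^+ i * d ^+ (n - i).

(* (p,d)-adic completeness: A -> lim_n A/(p,d)^n is bijective. *)
Definition adically_complete_pd (p d : A) : Prop :=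
  (forall x : A, (forall n, in_pow_pd p d n x) -> x = 0) /\
  (forall a : nat -> A, (forall n, in_pow_pd p d n (a n.+1 - a n)) ->
     exists x : A, forall n, in_pow_pd p d n (x - a n)).

End Defs.

(* Main.v *)
Require Import Defs.
From mathcomp Require Import all_boot all_order all_algebra.
From mathcomp Require Import ring zify.
From Stdlib Require Import IndefiniteDescription.
Import GRing.Theory.
Local Open Scope ring_scope.

Lemma unit_mul (A : comPzRingType) (u v : A) : is_unit u -> is_unit v -> is_unit (u * v).
Proof. move=> [u' hu] [v' hv]; exists (u' * v'). by rewrite mulrACA hu hv mulr1. Qed.

Lemma reg_unit (A : comPzRingType) (x y u z : A) :
  is_unit u -> regular2 x y -> regular2 x (u * y + x * z).
Proof.
move=> [u' hu] [h1 h2 h3]; split=> //.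
- move=> a b e.
  have e' : y * (u * a) = x * (b - z * a).
    by rewrite mulrBr -e; ring.
  have [c hc] := h2 _ _ e'.
  exists (u' * c).
  have -> : a = u' * (u * a) by rewrite mulrA (mulrC u') hu mul1r.
  by rewrite hc; ring.
- move=> [a [b e]]; apply: h3; exists (a + z * b), (u * b).
  by rewrite -e; ring.
Qed.

Lemma reg_unit_iff (A : comPzRingType) (x y y' u u' z : A) :
  u * u' = 1 -> y' = u * y + x * z -> regular2 x y <-> regular2 x y'.
Proof.
move=> hu ->; split; first by apply: reg_unit; exists u'.
move=> h.
have -> : y = u' * (u * y + x * z) + x * (- u' * z).
  have -> : u' * (u * y + x * z) + x * (- u' * z) = (u * u') * y by ring.
  by rewrite hu mul1r.
by apply: reg_unit=> //; exists u; rewrite mulrC.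
Qed.

Lemma pow_sum (A : comPzRingType) (x y a b : A) (k : nat) :
  exists s, (x * a + y * b) ^+ k = x * s + y ^+ k * b ^+ k.
Proof.
elim: k => [|k [s hs]]; first by exists 0; rewrite !expr0; ring.
exists (a * (x * s + y ^+ k * b ^+ k) + y * b * s).
by rewrite exprS hs !exprS; ring.
Qed.

Lemma reg_pow (A : comPzRingType) (x y : A) (n : nat) :
  regular2 x y <-> regular2 x (y ^+ n.+1).
Proof.
split.
- move=> [h1 h2 h3]; split=> //.
  + elim: n => [|n IH] a b; first by rewrite expr1; apply: h2.
    rewrite exprS -mulrA => e.
    have [c hc] := h2 _ _ e.
    apply: (IH a c); by rewrite -hc.
  + move=> [a [b e]]; apply: h3; exists a, (y ^+ n * b).
    by rewrite -e exprS mulrA.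
- move=> [h1 h2 h3]; split=> //.
  + move=> a b e; apply: (h2 a (y ^+ n * b)).
    by rewrite exprSr -mulrA e; ring.
  + move=> [a [b e]]; apply: h3.
    have [s hs] := pow_sum _ x y a b n.+1.
    exists s, (b ^+ n.+1); by rewrite -hs e expr1n.
Qed.
Definition lim_complete (A : comPzRingType) (g : A) : Prop :=
  forall x : nat -> A, (forall n, x n = g * x n.+1) -> forall n, x n = 0.

Arguments lim_complete {A}.

Lemma reg_swap (A : comPzRingType) (x y : A) :
  regular2 x y ->
  (forall a : nat -> A, (forall n, a n = x * a n.+1) -> (forall n, y * a n = 0) -> a 0%N = 0) ->
  regular2 y x.
Proof.
move=> [h1 h2 h3] H; split.
- have hg : forall a, {c | y * a = 0 -> a = x * c /\ y * c = 0}.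
    move=> a; apply: constructive_indefinite_description.
    case: (eqVneq (y * a) 0) => [e|ne]; last by exists 0 => e; rewrite e eqxx in ne.
    have [c hc] : exists c, a = x * c by apply: (h2 a 0); rewrite e mulr0.
    exists c => _; split=> //; apply: h1.
    by rewrite mulrCA -hc.
  move=> a0 e0.
  pose b n := iter n (fun a => sval (hg a)) a0.
  have hb : forall n, y * b n = 0 /\ b n = x * b n.+1.
    elim=> [|n [IH1 IH2]].
      have := svalP (hg a0) e0; rewrite /b /= => -[? ?]; by [].
    have := svalP (hg (b n)) IH1 => -[? ?].
    have := svalP (hg (b n.+1)) (proj2 (svalP (hg (b n)) IH1)) => -[? ?].
    by [].
  apply: (H b); move=> n; by case: (hb n).
- move=> a b e.
  have [c hc] := h2 b a (esym e).
  exists c; apply/eqP; rewrite -subr_eq0; apply/eqP; apply: h1.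
  rewrite mulrBr e hc; ring.
- move=> [a [b e]]; apply: h3; exists b, a; by rewrite addrC.
Qed.

Lemma chain_complete (A : comPzRingType) (x y : A) :
  lim_complete x ->
  forall a : nat -> A, (forall n, a n = x * a n.+1) -> (forall n, y * a n = 0) -> a 0%N = 0.
Proof. move=> H a ha _; exact: H. Qed.

Lemma chain_pow (A : comPzRingType) (x : A) (a : nat -> A) :
  (forall n, a n = x * a n.+1) -> forall N n, a n = x ^+ N * a (n + N)%N.
Proof.
move=> ha; elim=> [|N IH] n; first by rewrite expr0 mul1r addn0.
by rewrite IH ha exprSr -mulrA addnS.
Qed.

Lemma chain_CP2 (A : comPzRingType) (x y q z c' : A) (N : nat) :
  y * c' = x ^+ N + q * z -> lim_complete q ->
  forall a : nat -> A, (forall n, a n = x * a n.+1) -> (forall n, y * a n = 0) -> a 0%N = 0.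
Proof.
move=> e H a ha hy.
have step : forall n, a n = q * (- z * a (n + N)%N).
  move=> n.
  have h0 : (x ^+ N + q * z) * a (n + N)%N = 0.
    by rewrite -e mulrAC hy mul0r.
  rewrite (chain_pow _ _ _ ha N n).
  apply/eqP; rewrite -subr_eq0; apply/eqP; rewrite -h0; ring.
pose b k := (- z) ^+ k * a (k * N)%N.
have hb : forall k, b k = q * b k.+1.
  move=> k; rewrite /b step mulSn (addnC N).
  rewrite exprS; ring.
have := H b hb 0%N; by rewrite /b mul0n expr0 mul1r.
Qed.
Local Open Scope nat_scope.
Definition Tn (p m : nat) := \sum_(1 <= i < p) ('C(p, i) %/ p) * m ^ i.
Definition Sn (p n : nat) := \sum_(m < n) Tn p m.

Lemma Tn_eq p m : prime p -> p * Tn p m + m ^ p + 1 = (m + 1) ^ p.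
Proof.
move=> hp; have p1 := prime_gt1 hp.
rewrite (addnC m 1) expnDn.
have -> : \sum_(i < p.+1) 'C(p, i) * (1 ^ (p - i) * m ^ i) =
          \sum_(0 <= i < p.+1) 'C(p, i) * (1 ^ (p - i) * m ^ i) by rewrite big_mkord.
rewrite big_nat_recr //= big_ltn //=.
rewrite bin0 subn0 exp1n expn0 !mul1n binn subnn expn0 mul1n.
rewrite /Tn big_distrr /=.
have -> : \sum_(1 <= i < p) p * ('C(p, i) %/ p * m ^ i) =
          \sum_(1 <= i < p) 'C(p, i) * (1 ^ (p - i) * m ^ i).
  apply: eq_big_nat => i /andP [i1 ip].
  rewrite exp1n mul1n mulnA [p * _]mulnC divnK // prime_dvd_bin // i1 ip //.
  by rewrite [1 * _]mul1n; lia.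
exact: prime_gt0.
Qed.

Lemma Sn_eq p n : prime p -> p * Sn p n + n = n ^ p.
Proof.
move=> hp; have p1 := prime_gt1 hp.
elim: n => [|n IH]; first by rewrite /Sn big_ord0 muln0 exp0n // ltnW.
rewrite /Sn big_ord_recr /= -/(Sn p n) mulnDr -addn1 -Tn_eq //.
rewrite -IH; lia.
Qed.

Lemma Sn_p p : prime p -> Sn p p + 1 = p ^ p.-1.
Proof.
move=> hp; have p0 := prime_gt0 hp.
apply/eqP; rewrite -(eqn_pmul2l p0) -expnS prednK // -Sn_eq //.
by rewrite mulnDr muln1.
Qed.

Local Open Scope ring_scope.
Local Open Scope ring_scope.

Lemma delta_nat {A : comPzRingType} {p} {delta : A -> A} :
  delta_ring p delta -> forall n : nat, delta n%:R = - (Sn p n)%:R.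
Proof.
move=> [d0 d1 dD dM]; elim=> [|n IH]; first by rewrite d0 /Sn big_ord0 oppr0.
rewrite -natr1 dD IH d1 /Sn big_ord_recr /= natrD opprD addr0; congr (_ - _).
rewrite /Tn natr_sum; apply: eq_bigr => i _.
by rewrite natrM natrX expr1n mulr1.
Qed.

Lemma delta_p {A : comPzRingType} {p} {delta : A -> A} :
  prime p -> delta_ring p delta -> exists s, delta p%:R = 1 + p%:R * s.
Proof.
move=> hp hd; have p1 := prime_gt1 hp.
exists (- (p ^ (p.-2))%:R).
rewrite (delta_nat hd p).
have e := Sn_p p hp.
have -> : (Sn p p)%:R = (p ^ p.-1)%:R - 1 :> A by rewrite -e natrD addrK.
have -> : p.-1 = (p.-2).+1 by lia.
rewrite expnS natrM; ring.
Qed.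

Definition pm {A : comPzRingType} (p : nat) (a : A) := exists s, a = p%:R * s.
Arguments pm {A}.

Lemma pmD {A : comPzRingType} p (a b : A) : pm p a -> pm p b -> pm p (a + b).
Proof. by move=> [s ->] [t ->]; exists (s + t); ring. Qed.

Lemma pm_sum {A : comPzRingType} p (r : seq nat) (P : pred nat) (F : nat -> A) :
  (forall i, P i -> pm p (F i)) -> pm p (\sum_(i <- r | P i) F i).
Proof.
move=> H; apply: (big_ind (pm p)) => //; first by exists 0; rewrite mulr0.
exact: pmD.
Qed.

Lemma delta_pow {A : comPzRingType} {p} {delta : A -> A} :
  delta_ring p delta -> forall (x : A) (n : nat),
  exists s, delta (x ^+ n.+1) = (n.+1)%:R * (x ^+ p) ^+ n * delta x + p%:R * s.
Proof.
move=> [d0 d1 dD dM] x; elim=> [|n [s IH]].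
  by exists 0; rewrite expr1 expr0 mulr0 addr0 mul1r mul1r.
exists (x ^+ p * s + delta x * delta (x ^+ n.+1)).
rewrite (exprS x n.+1) dM IH (exprAC x n.+1 p).
rewrite -[n.+2%:R]natr1 (exprS (x ^+ p) n).
set u := x ^+ p ^+ n; set v := x ^+ p; set w := n.+1%:R; set P := p%:R.
ring.
Qed.

Lemma delta_xp {A : comPzRingType} {p} {delta : A -> A} :
  prime p -> delta_ring p delta -> forall x : A, pm p (delta (x ^+ p)).
Proof.
move=> hp hd x; have p1 := prime_gt1 hp.
have [s hs] := delta_pow hd x p.-1.
rewrite prednK ?(ltnW p1) // in hs.
rewrite hs; exists ((x ^+ p) ^+ p.-1 * delta x + s); ring.
Qed.

Lemma delta_add_p {A : comPzRingType} {p} {delta : A -> A} :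
  prime p -> delta_ring p delta -> forall a y : A,
  exists s, delta (a + p%:R * y) = delta a + delta (p%:R * y) + p%:R * s.
Proof.
move=> hp [d0 d1 dD dM] a y.
rewrite dD.
have [s hs] : pm p (\sum_(1 <= i < p) ('C(p, i) %/ p)%:R * a ^+ i * (p%:R * y) ^+ (p - i)).
  rewrite big_nat_cond; apply: pm_sum => i /andP [/andP [i1 ip] _].
  have -> : (p - i = (p - i).-1.+1)%N by lia.
  exists (('C(p, i) %/ p)%:R * a ^+ i * (y * (p%:R * y) ^+ (p - i).-1)).
  rewrite exprS; ring.
by exists (- s); rewrite hs; ring.
Qed.

Lemma delta_pmul {A : comPzRingType} {p} {delta : A -> A} :
  prime p -> delta_ring p delta -> forall y : A,
  exists s, delta (p%:R * y) = y ^+ p + p%:R * s.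
Proof.
move=> hp hd y; have p1 := prime_gt1 hp.
have [s0 hs0] := delta_p hp hd.
case: hd => [d0 d1 dD dM].
rewrite dM hs0.
have -> : (p%:R : A) ^+ p = p%:R * p%:R ^+ p.-1 by rewrite -exprS prednK // ltnW.
exists (p%:R ^+ p.-1 * delta y + y ^+ p * s0 + (1 + p%:R * s0) * delta y); ring.
Qed.

Lemma delta_frob {A : comPzRingType} {p} {delta : A -> A} :
  prime p -> delta_ring p delta -> forall x : A,
  exists s, delta (frob p delta x) = (delta x) ^+ p + p%:R * s.
Proof.
move=> hp hd x; rewrite /frob.
have [s1 h1] := delta_add_p hp hd (x ^+ p) (delta x).
have [s2 h2] := delta_xp hp hd x.
have [s3 h3] := delta_pmul hp hd (delta x).
by exists (s1 + s2 + s3); rewrite h1 h2 h3; ring.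
Qed.
Local Open Scope ring_scope.

Lemma jacobson {A : comPzRingType} (q : A) :
  derived_complete_elem q -> forall y, is_unit (1 + q * y).
Proof.
move=> [Hl Hr] y.
have [x hx] := Hr (fun n => (- y) ^+ n).
have hs : forall n, (- y) * x n - x n.+1 = q * ((- y) * x n.+1 - x n.+2).
  move=> n; apply/eqP; rewrite -subr_eq0; apply/eqP.
  have e1 := hx n; have e2 := hx n.+1.
  have : (- y) * ((- y) ^+ n) - (- y) ^+ n.+1 = 0 by rewrite exprS subrr.
  rewrite {1}e1 e2 => <-; ring.
have h1 := Hl _ hs 0%N; simpl in h1.
have e1 : x 1%N = - y * x 0%N.
  apply/eqP; rewrite eq_sym -subr_eq0; exact/eqP.
exists (x 0%N).
have e0 := hx 0%N; rewrite expr0 in e0.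
rewrite [RHS]e0 e1; ring.
Qed.

Lemma unit_add {A : comPzRingType} (q u z : A) :
  derived_complete_elem q -> is_unit u -> is_unit (u + q * z).
Proof.
move=> hq [u' hu].
have [w hw] := jacobson _ hq (z * u').
exists (u' * w); rewrite -hw.
have -> : 1 + q * (z * u') = (u * u') + q * (z * u') by rewrite hu.
ring.
Qed.

Lemma unit_exp {A : comPzRingType} (u : A) n : is_unit u -> is_unit (u ^+ n).
Proof. by move=> [u' hu]; exists (u' ^+ n); rewrite -exprMn hu expr1n. Qed.

Lemma mod_pow {A : comPzRingType} (x q t : A) n :
  exists s, (x + q * t) ^+ n = x ^+ n + q * s.
Proof.
elim: n => [|n [s IH]]; first by exists 0; rewrite !expr0; ring.
exists (x * s + t * (x ^+ n + q * s)).
rewrite !exprS IH; ring.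
Qed.

Lemma frob_iter_mod {A : comPzRingType} p (delta : A -> A) (a : A) n :
  exists s, iter n (frob p delta) a = a ^+ (p ^ n) + p%:R * s.
Proof.
elim: n => [|n [s IH]]; first by exists 0; rewrite expn0 expr1 mulr0 addr0.
rewrite iterS {1}/frob IH.
have [s' hs'] := mod_pow (a ^+ (p ^ n)) p%:R s p.
exists (s' + delta (a ^+ (p ^ n) + p%:R * s)).
rewrite hs' -exprM -expnSr; ring.
Qed.

Lemma dist_iter {A : comPzRingType} p (delta : A -> A) (d : A) :
  prime p -> delta_ring p delta -> derived_complete_elem (p%:R : A) ->
  is_unit (delta d) -> forall m, is_unit (delta (iter m (frob p delta) d)).
Proof.
move=> hp hd hc hu; elim=> [|m IH] //=.
have [s hs] := delta_frob hp hd (iter m (frob p delta) d).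
rewrite hs; apply: unit_add => //; exact: unit_exp.
Qed.

Lemma frob_iter_e {A : comPzRingType} p (delta : A -> A) (e : A) :
  prime p -> derived_complete_elem (p%:R : A) ->
  (forall m, is_unit (delta (iter m (frob p delta) e))) ->
  forall k, exists w t, is_unit w /\ iter k.+1 (frob p delta) e = w * p%:R + e * t.
Proof.
move=> hp hc hu; have p1 := prime_gt1 hp.
have ep : forall x : A, x ^+ p = x * x ^+ p.-1.
  by move=> x; rewrite -exprS prednK // ltnW.
elim=> [|k [w [t [hw IH]]]].
  exists (delta e), (e ^+ p.-1); split; first exact: (hu 0%N).
  by rewrite /= /frob ep; ring.
rewrite iterS {1}/frob IH.
have [s hs] := mod_pow (w * p%:R) e t p.
exists (delta (w * p%:R + e * t) + p%:R * (w ^+ p * p%:R ^+ p.-2)), s; split.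
  apply: unit_add => //; rewrite -IH; exact: (hu k.+1).
rewrite hs exprMn (ep p%:R).
have -> : (p%:R : A) ^+ p.-1 = p%:R * p%:R ^+ p.-2 by rewrite -exprS; congr (_ ^+ _); lia.
ring.
Qed.
Local Open Scope ring_scope.

Lemma choice_nat {T : Type} (Q : nat -> T -> Prop) :
  (forall n, exists t, Q n t) -> exists f : nat -> T, forall n, Q n (f n).
Proof.
move=> H; exists (fun n => proj1_sig (constructive_indefinite_description _ (H n))).
move=> n; exact: proj2_sig (constructive_indefinite_description _ (H n)).
Qed.

Lemma nzd_pow {A : comPzRingType} (x : A) :
  (forall a, x * a = 0 -> a = 0) -> forall m a, x ^+ m * a = 0 -> a = 0.
Proof.
move=> h; elim=> [|m IH] a; first by rewrite expr0 mul1r.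
by rewrite exprSr -mulrA => /IH /h.
Qed.

Lemma nzd_mod_pow {A : comPzRingType} (P D : A) :
  regular2 P D -> forall m a b, D * a = P ^+ m * b -> exists c, a = P ^+ m * c.
Proof.
move=> [h1 h2 h3]; elim=> [|m IH] a b.
  by move=> _; exists a; rewrite expr0 mul1r.
rewrite exprS -mulrA => e.
have [a1 ha1] := h2 _ _ e.
have e' : D * a1 = P ^+ m * b.
  apply/eqP; rewrite -subr_eq0; apply/eqP; apply: h1.
  have -> : P * (D * a1 - P ^+ m * b) = D * (P * a1) - P * (P ^+ m * b) by ring.
  by rewrite -ha1 e subrr.
have [c hc] := IH _ _ e'.
by exists c; rewrite ha1 hc mulrA.
Qed.

Lemma nzd_mod_pow2 {A : comPzRingType} (P D : A) :
  regular2 P D -> forall m n a b, D ^+ n * a = P ^+ m * b -> exists c, a = P ^+ m * c.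
Proof.
move=> hr m; elim=> [|n IH] a b.
  by rewrite expr0 mul1r => ->; exists b.
rewrite exprSr -mulrA => /IH [c hc].
exact: nzd_mod_pow _ _ hr m a c hc.
Qed.

Lemma stepA {A : comPzRingType} (P D : A) :
  regular2 P D -> derived_complete_elem D -> forall m x,
  (forall n, exists u v, x = P ^+ m * u + D ^+ n * v) -> exists c, x = P ^+ m * c.
Proof.
move=> hr [Hl Hr] m x H.
have [U hU] := choice_nat _ H.
have [V hV] := choice_nat _ (fun n => hU n).
have H2 : forall n, exists c, V n - D * V n.+1 = P ^+ m * c.
  move=> n; apply: (nzd_mod_pow2 _ _ hr m n _ (U n.+1 - U n)).
  have e := hV n; rewrite (hV n.+1) in e.
  apply/eqP; rewrite -subr_eq0; apply/eqP.
  have -> : D ^+ n * (V n - D * V n.+1) - P ^+ m * (U n.+1 - U n) =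
            (P ^+ m * U n + D ^+ n * V n) - (P ^+ m * U n.+1 + D ^+ n.+1 * V n.+1).
    rewrite exprSr; ring.
  by rewrite -e subrr.
have [C hC] := choice_nat _ H2.
have [X hX] := Hr C.
have hch : forall n, V n - P ^+ m * X n = D * (V n.+1 - P ^+ m * X n.+1).
  move=> n; apply/eqP; rewrite -subr_eq0; apply/eqP.
  have e := hC n; rewrite (hX n) in e.
  have -> : V n - P ^+ m * X n - D * (V n.+1 - P ^+ m * X n.+1) =
            (V n - D * V n.+1) - P ^+ m * (X n - D * X n.+1) by ring.
  by rewrite e subrr.
have h0 := Hl _ hch 0%N; simpl in h0.
exists (U 0%N + X 0%N).
rewrite (hV 0%N) expr0 mul1r.
have -> : V 0%N = P ^+ m * X 0%N.
  by apply/eqP; rewrite -subr_eq0; apply/eqP.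
ring.
Qed.

Lemma stepB {A : comPzRingType} (P : A) :
  (forall a, P * a = 0 -> a = 0) -> derived_complete_elem P -> forall x,
  (forall m, exists c, x = P ^+ m * c) -> x = 0.
Proof.
move=> h1 [Hl _] x H.
have [C hC] := choice_nat _ H.
have hch : forall n, C n = P * C n.+1.
  move=> n; apply/eqP; rewrite -subr_eq0; apply/eqP.
  apply: (nzd_pow _ h1 n).
  have -> : P ^+ n * (C n - P * C n.+1) = P ^+ n * C n - P ^+ n.+1 * C n.+1.
    rewrite exprSr; ring.
  by rewrite -hC -hC subrr.
have := Hl _ hch 0%N; by rewrite (hC 0%N) expr0 mul1r.
Qed.

Lemma pd_split {A : comPzRingType} (P D x : A) n :
  in_pow_pd P D (n + n) x -> exists u v, x = P ^+ n * u + D ^+ n * v.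
Proof.
move=> [c ->].
apply: (big_ind (fun y => exists u v, y = P ^+ n * u + D ^+ n * v)).
- by exists 0, 0; ring.
- by move=> y z [u [v ->]] [u' [v' ->]]; exists (u + u'), (v + v'); ring.
move=> i _; case: (leqP n i) => h.
  exists (c i * P ^+ (i - n) * D ^+ (n + n - i)), 0.
  have -> : P ^+ i = P ^+ n * P ^+ (i - n) by rewrite -exprD subnKC.
  ring.
exists 0, (c i * P ^+ i * D ^+ (n - i)).
have -> : (n + n - i = n + (n - i))%N by lia.
rewrite exprD; ring.
Qed.

Lemma separated {A : comPzRingType} (P D : A) :
  regular2 P D -> derived_complete_elem P -> derived_complete_elem D ->
  forall x, (forall n, in_pow_pd P D n x) -> x = 0.
Proof.
move=> hr hP hD x H.
case: hr => h1 h2 h3.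
apply: (stepB _ h1) => // m.
apply: (stepA _ _ (And3 h1 h2 h3) hD) => n.
have [u [v e]] := pd_split _ _ _ _ (H (maxn m n + maxn m n)%N).
exists (P ^+ (maxn m n - m) * u), (D ^+ (maxn m n - n) * v).
rewrite e !mulrA -!exprD !subnKC //; [exact: leq_maxr | exact: leq_maxl].
Qed.

Lemma complete_lim {A : comPzRingType} (P D : A) :
  derived_complete_elem P -> derived_complete_elem D ->
  forall a : nat -> A, (forall n, in_pow_pd P D n (a n.+1 - a n)) ->
  exists x, forall n, in_pow_pd P D n (x - a n).
Proof.
move=> [_ HP] [_ HD] a H.
have [c hc] := choice_nat _ H.
have [X hX] := choice_nat (fun i Xi => forall j, c (i + j)%N i = Xi j - D * Xi j.+1)
  (fun i => HD (fun j => c (i + j)%N i)).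
have [Y hY] := HP (fun i => X i 0%N).
have claim : forall n, Y 0%N - (a n - a 0%N) =
    \sum_(i < n) P ^+ i * D ^+ (n - i) * X i (n - i)%N + P ^+ n * Y n.
  elim=> [|n IH]; first by rewrite big_ord0 subrr expr0; ring.
  have -> : Y 0%N - (a n.+1 - a 0%N) = (Y 0%N - (a n - a 0%N)) - (a n.+1 - a n) by ring.
  rewrite IH hc big_ord_recr big_ord_recr /=.
  have -> : \sum_(i < n) P ^+ i * D ^+ (n.+1 - i) * X i (n.+1 - i)%N =
            \sum_(i < n) P ^+ i * D ^+ (n - i) * X i (n - i)%N -
            \sum_(i < n) c n i * P ^+ i * D ^+ (n - i).
    rewrite -sumrB; apply: eq_bigr => i _ /=.
    have hi : (i <= n)%N by exact: ltnW (ltn_ord i).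
    have e := hX i (n - i)%N; rewrite subnKC // in e.
    rewrite e subSn // exprSr; ring.
  have e1 := hY n; have e2 := hX n 0%N; rewrite addn0 /= in e2.
  rewrite subnn subSn // subnn expr0 expr1 exprS e2.
  simpl in e1; rewrite e1.
  ring.
exists (a 0%N + Y 0%N) => n.
exists (fun i => if (i < n)%N then X i (n - i)%N else Y n).
have -> : a 0%N + Y 0%N - a n = Y 0%N - (a n - a 0%N) by ring.
rewrite claim big_ord_recr /= ltnn subnn expr0 mulr1.
congr (_ + _); last by ring.
apply: eq_bigr => i _ /=; rewrite ltn_ord; ring.
Qed.
Local Open Scope ring_scope.

Lemma adic {A : comPzRingType} (P D : A) :
  regular2 P D -> derived_complete_elem P -> derived_complete_elem D ->
  adically_complete_pd P D.
Proof.
move=> hr hP hD; split; first exact: separated.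
exact: complete_lim.
Qed.

Theorem lemma2p9 (p : nat) (A : comPzRingType) (delta : A -> A)
    (I : A -> Prop) (d : A) :
  prime p -> Zp_localized A p -> delta_ring p delta ->
  (forall x : A, I x <-> exists a : A, x = a * d) ->
  distinguished delta d ->
  derived_complete [:: p%:R; d] ->
  let phi := frob p delta in
  [<-> regular2 p%:R d;
       regular2 d p%:R;
       regular2 (phi d) d;
       regular2 d (phi d);
       regular2 p%:R (phi d);
       regular2 (phi d) p%:R;
       forall i : nat, regular2 p%:R (iter i.+1 phi d);
       forall i : nat, regular2 (iter i.+1 phi d) p%:R;
       forall i j : nat, i != j -> regular2 (iter i.+1 phi d) (iter j.+1 phi d)]
  /\ (regular2 p%:R d -> adically_complete_pd p%:R d).
Proof.
move=> hp _ hd _ hdist hdc phi.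
have hP : derived_complete_elem (p%:R : A) by apply: hdc; rewrite inE eqxx.
have hD : derived_complete_elem d by apply: hdc; rewrite !inE eqxx orbT.
have p1 := prime_gt1 hp.
have [v' hv] := hdist.
set v := delta d in hv.
have phid : phi d = d ^+ p + p%:R * v by [].
have dp : d ^+ p = d * d ^+ p.-1 by rewrite -exprS prednK // ltnW.
have pp : p = (p.-1).+1 by rewrite prednK // ltnW.
have E2 : regular2 p%:R d <-> regular2 d p%:R.
  split=> h; apply: reg_swap h _; apply: chain_complete.
  - exact: (proj1 hP).
  - exact: (proj1 hD).
have E4 : regular2 p%:R d <-> regular2 d (phi d).
  rewrite E2; apply: (reg_unit_iff _ d p%:R (phi d) v v' (d ^+ p.-1) hv).
  by rewrite phid dp; ring.
have E5' : regular2 p%:R (d ^+ p) <-> regular2 p%:R (phi d).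
  apply: (reg_unit_iff _ p%:R (d ^+ p) (phi d) 1 1 v); first by rewrite mulr1.
  by rewrite phid mul1r.
have E5 : regular2 p%:R d <-> regular2 p%:R (phi d).
  by rewrite -E5'; have := reg_pow _ (p%:R : A) d p.-1; rewrite -pp.
have E6 : regular2 p%:R d <-> regular2 (phi d) p%:R.
  rewrite E5; split=> h; apply: reg_swap h _.
  - apply: chain_complete; exact: (proj1 hP).
  - apply: (chain_CP2 _ (phi d) p%:R d (- d ^+ p.-1) v 1 _ (proj1 hD)).
    by rewrite expr1 phid dp; ring.
have E3 : regular2 p%:R d <-> regular2 (phi d) d.
  rewrite E6 (reg_pow _ (phi d) d p.-1) -pp.
  apply: (reg_unit_iff _ (phi d) p%:R (d ^+ p) (- v) (- v') 1).
    by rewrite mulrNN.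
  by rewrite phid; ring.
have E7 : regular2 p%:R d <-> forall i, regular2 p%:R (iter i.+1 phi d).
  have Ei : forall i, regular2 p%:R d <-> regular2 p%:R (iter i.+1 phi d).
    move=> i; have [s hs] := frob_iter_mod p delta d i.+1.
    have hN : (p ^ i.+1 = (p ^ i.+1).-1.+1)%N by rewrite prednK // expn_gt0 ltnW.
    rewrite (reg_pow _ _ d (p ^ i.+1).-1) -hN.
    apply: (reg_unit_iff _ p%:R _ _ 1 1 s); first by rewrite mulr1.
    by rewrite /phi hs mul1r.
  split; first by move=> h i; apply/Ei.
  by move=> h; apply/(Ei 0%N).
have E8 : regular2 p%:R d <-> forall i, regular2 (iter i.+1 phi d) p%:R.
  split.
    move=> /E7 h i; apply: reg_swap (h i) _; apply: chain_complete; exact: (proj1 hP).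
  by move=> h; apply/E6; exact: (h 0%N).
have dist : forall m, is_unit (delta (iter m phi d)).
  by apply: dist_iter => //; exists v'.
have Llt : forall i j, (i < j)%N -> regular2 (iter i.+1 phi d) p%:R ->
    regular2 (iter i.+1 phi d) (iter j.+1 phi d).
  move=> i j hij h.
  have hu' : forall m, is_unit (delta (iter m phi (iter i.+1 phi d))).
    by move=> m; rewrite -iterD; exact: dist.
  have [w [t [hw e]]] := frob_iter_e p delta (iter i.+1 phi d) hp hP hu' (j - i).-1.
  have -> : iter j.+1 phi d = iter (j - i).-1.+1 phi (iter i.+1 phi d).
    by rewrite -iterD; have -> : ((j - i).-1.+1 + i.+1 = j.+1)%N by lia.
  rewrite e; have [w' hw'] := hw.
  exact: (proj1 (reg_unit_iff _ _ p%:R _ w w' t hw' (erefl _)) h).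
have E9 : regular2 p%:R d <-> forall i j, i != j -> regular2 (iter i.+1 phi d) (iter j.+1 phi d).
  split.
    move=> h i j hij; have h8 := (proj1 E8 h).
    case: (ltngtP i j) => [hl|hl|he]; last by rewrite he eqxx in hij.
      exact: Llt.
    have h1 := Llt j i hl (h8 j).
    apply: reg_swap h1 _.
    have [s hs] := frob_iter_mod p delta (iter j.+1 phi d) (i - j).
    apply: (chain_CP2 _ _ _ p%:R s 1 (p ^ (i - j)) _ (proj1 hP)).
    rewrite mulr1 -hs -iterD.
    by have -> : (i - j + j.+1 = i.+1)%N by lia.
  move=> h; apply/E6.
  have h01 := h 0%N 1%N isT.
  have [u hu] := dist 1%N.
  apply: (proj2 (reg_unit_iff _ (phi d) p%:R (iter 2 phi d) (delta (phi d)) u ((phi d) ^+ p.-1) hu _) h01).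
  rewrite /= -/(phi d) {1}/phi /frob -/(phi d) -exprS -pp; ring.
split; last by move=> h; apply: adic.
tfae.
- by move/E2.
- by move/E2/E3.
- by move/E3/E4.
- by move/E4/E5.
- by move/E5/E6.
- by move/E6/E7.
- by move/E7/E8.
- by move/E8/E9.
- by move/E9.
Qed.
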